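(* Let $\varepsilon>0$ be a given security threshold (written $\mathsf{negl}(\lambda)$ in the paper) and let $\eta\in\mathbb{Z}^+$ satisfy $1/\eta<\varepsilon$. In the setting described in the context (with $M_o$ strictly positive definite), if \[ \frac{1}{\eta^2}\,\big\|M_c''\,(M_o')^{-1}\,M_c''\big\|\;\le\;\frac14\,\lambda_{\min}(M_o'), \] then both $M_f^{(0)}$ and $M_f^{(1)}$ are density matrices (Hermitian, positive semidefinite, trace one).
   Context: Let $d_1\ge d_2\ge 1$ be integers, $\mathcal H_M=(\mathbb C^2)^{\otimes d_1}$, $\mathcal H_{M_c}=(\mathbb C^2)^{\otimes d_2}$. For $n\ge 1$ and $k\in\{0,1\}^{2n}$ let $U_k=\bigotimes_{j=1}^{n}X^{k_{2j-1}}Z^{k_{2j}}$, where $X,Z$ are the Pauli matrices (quantum one-time pad). Let $M_o$ be a strictly positive definite density matrix on $\mathcal H_M$ and $M_c$ a density matrix on $\mathcal H_{M_c}$. For keys $k\in\{0,1\}^{2d_1}$, $k'\in\{0,1\}^{2d_2}$ put $M_o'=U_kM_oU_k^\dagger$ and $M_c'=U_{k'}M_cU_{k'}^\dagger$. Let $V:\mathcal H_{M_c}\to\mathcal H_M$ be the isometry $V|\psi\rangle=|\psi\rangle\otimes|0\rangle^{\otimes(d_1-d_2)}$ and $M_c''=VM_c'V^\dagger$. On $\mathbb C^2\otimes\mathcal H_M$ (block form with respect to the computational basis of the first, control, qubit) define \[ M_a^{(0)}=\begin{pmatrix}\tfrac12M_o'&0\\0&\tfrac12M_o'\end{pmatrix},\qquad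 M_a^{(1)}=\begin{pmatrix}\tfrac12M_o'&\tfrac1\eta M_c''\\ \tfrac1\eta (M_c'')^\dagger&\tfrac12M_o'\end{pmatrix}. \] For a $2^{d_1+1}\times2^{d_1+1}$ permutation matrix $U_\sigma$ let $M_f^{(b)}=U_\sigma M_a^{(b)}U_\sigma^\dagger$ for $b\in\{0,1\}$. Here $\|\cdot\|$ is the operator norm and $\lambda_{\min}$ the smallest eigenvalue. *)

(* Defs.v *)
(* Complex scalars: an arbitrary numClosedFieldType C
   (e.g. algC, or complex R for a real closed field R). *)
From HB Require Import structures.
From mathcomp Require Import all_boot all_order all_algebra all_fingroup.
From mathcomp Require Import sesquilinear spectral.
Set Implicit Arguments. Unset Strict Implicit. Unset Printing Implicit Defensive.
Import Order.TTheory GRing.Theory Num.Theory.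
Local Open Scope ring_scope.

Section QDefs.
Variable C : numClosedFieldType.

Definition dag m n (A : 'M[C]_(m, n)) : 'M[C]_(n, m) := map_mx Num.conj A^T.

Definition hermitian n (A : 'M[C]_n) : Prop := dag A = A.

(* positive semidefinite: Hermitian and <v|A|v> >= 0 for all v
   (row-vector convention: v A v^dagger) *)
Definition psd n (A : 'M[C]_n) : Prop :=
  hermitian A /\ forall v : 'rV[C]_n, 0 <= (v *m A *m dag v) 0 0.

Definition pos_def n (A : 'M[C]_n) : Prop :=
  hermitian A /\ forall v : 'rV[C]_n, v != 0 -> 0 < (v *m A *m dag v) 0 0.

Definition density_matrix n (A : 'M[C]_n) : Prop :=
  hermitian A /\ psd A /\ \tr A = 1.

(* eigenvalues (with multiplicity) of a normal (in particular Hermitian)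
   matrix, as given by MathComp's spectral theorem *)
Definition eigvals n (A : 'M[C]_n) : seq C :=
  [seq spectral_diag A 0 i | i <- enum 'I_n].

(* smallest / largest eigenvalue (meaningful for Hermitian matrices,
   whose eigenvalues are real) *)
Definition lambda_min n (A : 'M[C]_n) : C :=
  let s := eigvals A in foldr Num.min (head 0 s) s.
Definition lambda_max n (A : 'M[C]_n) : C :=
  let s := eigvals A in foldr Num.max (head 0 s) s.

(* operator norm (induced by the Euclidean norm) = largest singular value
   = sqrt (lambda_max (A^dagger A)) *)
Definition opnorm m n (A : 'M[C]_(m, n)) : C := sqrtC (lambda_max (dag A *m A)).

Definition pauliX : 'M[C]_2 := \matrix_(i, j) (i != j)%:R.
Definition pauliZ : 'M[C]_2 := \matrix_(i, j) ((i == j)%:R * (-1) ^+ (val i)).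

Definition pauli1 (x z : bool) : 'M[C]_2 :=
  (if x then pauliX else 1%:M) *m (if z then pauliZ else 1%:M).

(* the j-th qubit (j = 0 is the first / most significant qubit) of the
   computational basis index a of an n-qubit register *)
Definition qbit (n j a : nat) : 'I_2 := @inord 1 (odd (a %/ 2 ^ (n - j.+1))).

(* quantum one-time pad U_k = (x)_{j=1}^n X^{k_{2j-1}} Z^{k_{2j}},
   k in {0,1}^{2n} given as a (2n)-tuple (0-based: k_{2j}, k_{2j+1}) *)
Definition otp n (k : (2 * n).-tuple bool) : 'M[C]_(2 ^ n) :=
  \matrix_(a, b) \prod_(j < n)
     pauli1 (nth false k (2 * j)) (nth false k (2 * j).+1)
            (qbit n j a) (qbit n j b).

(* isometry V |psi> = |psi> (x) |0>^{(d1-d2)} *)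
Definition padV d1 d2 : 'M[C]_(2 ^ d1, 2 ^ d2) :=
  \matrix_(a, i) (val a == val i * 2 ^ (d1 - d2))%N%:R.

Lemma two_blocks d : (2 ^ d + 2 ^ d = 2 ^ d.+1)%N.
Proof. by rewrite expnS mul2n addnn. Qed.

(* 2x2 block matrix w.r.t. the first (control) qubit *)
Definition qblock d (A B D E : 'M[C]_(2 ^ d)) : 'M[C]_(2 ^ d.+1) :=
  castmx (two_blocks d, two_blocks d) (block_mx A B D E).

End QDefs.

(* Main.v *)
Require Import Defs.
From HB Require Import structures.
From mathcomp Require Import all_boot all_order all_algebra all_fingroup.
From mathcomp Require Import sesquilinear spectral.
From mathcomp Require Import ring zify.
Import Order.TTheory GRing.Theory Num.Theory.
Local Open Scope ring_scope.
Set Implicit Arguments. Unset Strict Implicit. Unset Printing Implicit Defensive.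

Section Aux.
Variable C : numClosedFieldType.
Implicit Types (m n p : nat).

Lemma dagK m n (A : 'M[C]_(m, n)) : dag (dag A) = A.
Proof. by apply/matrixP=> i j; rewrite !mxE conjCK. Qed.

Lemma dag_mul m n p (A : 'M[C]_(m, n)) (B : 'M[C]_(n, p)) :
  dag (A *m B) = dag B *m dag A.
Proof. by rewrite /dag trmx_mul map_mxM. Qed.

Lemma dagD m n (A B : 'M[C]_(m, n)) : dag (A + B) = dag A + dag B.
Proof. by rewrite /dag linearD /= map_mxD. Qed.

Lemma dagZ m n a (A : 'M[C]_(m, n)) : dag (a *: A) = a^* *: dag A.
Proof. by apply/matrixP=> i j; rewrite !mxE rmorphM. Qed.

Lemma dag0 m n : dag (0 : 'M[C]_(m, n)) = 0.
Proof. by apply/matrixP=> i j; rewrite !mxE rmorph0. Qed.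

Lemma dag1 n : dag (1%:M : 'M[C]_n) = 1%:M.
Proof. by rewrite /dag trmx1 map_mx1. Qed.

Lemma dag_inv n (A : 'M[C]_n) : dag (invmx A) = invmx (dag A).
Proof. by rewrite /dag trmx_inv map_invmx. Qed.

Lemma herm_hermsym n (A : 'M[C]_n) : Defs.hermitian A -> A \is @hermitianmx _ n false (@Num.conj C).
Proof. by move=> h; rewrite qualifE /= expr0 scale1r; apply/eqP; exact/esym. Qed.

Definition form n (A : 'M[C]_n) (u w : 'rV[C]_n) := (u *m A *m dag w) 0 0.

Lemma form_conj n (A : 'M[C]_n) u w : Defs.hermitian A -> (form A u w)^* = form A w u.
Proof.
move=> hA; rewrite /form.
have -> : ((u *m A *m dag w) 0 0)^* = dag (u *m A *m dag w) 0 0 by rewrite !mxE.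
by rewrite !dag_mul dagK hA mulmxA.
Qed.


Lemma formDl n (A : 'M[C]_n) u1 u2 w : form A (u1 + u2) w = form A u1 w + form A u2 w.
Proof. by rewrite /form !mulmxDl mxE. Qed.
Lemma formDr n (A : 'M[C]_n) u w1 w2 : form A u (w1 + w2) = form A u w1 + form A u w2.
Proof. by rewrite /form dagD mulmxDr mxE. Qed.
Lemma formZl n (A : 'M[C]_n) a u w : form A (a *: u) w = a * form A u w.
Proof. by rewrite /form -!scalemxAl mxE. Qed.
Lemma formZr n (A : 'M[C]_n) a u w : form A u (a *: w) = a^* * form A u w.
Proof. by rewrite /form dagZ -scalemxAr mxE. Qed.
Lemma form0r n (A : 'M[C]_n) u : form A u 0 = 0.
Proof. by rewrite /form dag0 mulmx0 mxE. Qed.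

Lemma form_real n (A : 'M[C]_n) u : Defs.hermitian A -> (form A u u)^* = form A u u.
Proof. by move=> hA; rewrite form_conj. Qed.

Lemma psd_form n (A : 'M[C]_n) u : pos_def A -> 0 <= form A u u.
Proof.
case=> _ hA; have [->|nz] := eqVneq u 0; first by rewrite form0r.
exact/ltW/hA.
Qed.

Lemma CS n (A : 'M[C]_n) u w : pos_def A ->
  form A u w * form A w u <= form A u u * form A w w.
Proof.
move=> pA; have hA := pA.1.
have [->|nz] := eqVneq w 0; first by rewrite !form0r !mul0r mulr0.
have qpos : 0 < form A w w by exact: pA.2.
set p := form A u u; set q := form A w w; set r := form A u w.
have rc : form A w u = r^* by rewrite /r form_conj.
have qc : q^* = q by rewrite /q form_real.
set t := - r / q.
have := psd_form (u + t *: w) pA.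
rewrite formDl !formDr !formZl !formZr -/p -/q -/r rc.
have -> : t^* = - r^* / q.
  by rewrite /t fmorph_div rmorphN; congr (_ / _); exact: qc.
have qn0 : q != 0 by rewrite gt_eqF.
have -> : p + (- r^* / q) * r + (t * r^* + t * ((- r^* / q) * q)) = p - r * r^* / q.
  by rewrite /t; field.
rewrite subr_ge0 ler_pdivrMr //.
Qed.


Lemma foldr_min_le (s : seq C) (h : C) : h \is Num.real ->
  all (fun x => x \is Num.real) s ->
  foldr Num.min h s \is Num.real /\ forall x, x \in s -> foldr Num.min h s <= x.
Proof.
move=> rh; elim: s => [|a s IH] /=; first by split.
case/andP=> ra /IH [rf hf]; split.
  by case: (real_leP ra rf).
move=> x; rewrite inE => /orP[/eqP->|xs].
  by case: (real_leP ra rf) => // /ltW.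
by case: (real_leP ra rf) => [al|/ltW la]; [apply: le_trans al (hf _ xs)|exact: hf].
Qed.

Lemma foldr_max_ge (s : seq C) (h : C) : h \is Num.real ->
  all (fun x => x \is Num.real) s ->
  foldr Num.max h s \is Num.real /\ forall x, x \in s -> x <= foldr Num.max h s.
Proof.
move=> rh; elim: s => [|a s IH] /=; first by split.
case/andP=> ra /IH [rf hf]; split.
  by case: (real_leP ra rf).
move=> x; rewrite inE => /orP[/eqP->|xs].
  by case: (real_leP ra rf) => // /ltW.
by case: (real_leP ra rf) => [al|/ltW la]; [exact: hf|apply: le_trans (hf _ xs) la].
Qed.


Lemma herm_decomp n (H : 'M[C]_n) y : Defs.hermitian H ->
  exists w : 'rV[C]_n,
    form H y y = \sum_i spectral_diag H 0 i * (w 0 i * (w 0 i)^*) /\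
    form 1%:M y y = \sum_i w 0 i * (w 0 i)^*.
Proof.
move=> hH.
have /hermitian_normalmx /orthomx_spectralP Heq := herm_hermsym hH.
set P := spectralmx H in Heq.
have Pu : P \in unitmx by exact: spectral_unit.
have Pinv : invmx P = dag P by rewrite invmx_unitary //; exact: spectral_unitarymx.
exists (y *m dag P); split.
  rewrite /form {1}Heq Pinv !mulmxA.
  have -> : y *m dag P *m diag_mx (spectral_diag H) *m P *m dag y =
     (y *m dag P) *m diag_mx (spectral_diag H) *m dag (y *m dag P).
    by rewrite dag_mul dagK !mulmxA.
  rewrite mxE; apply: eq_bigr => i _.
  by rewrite mul_mx_diag !mxE mulrCA mulrA.
rewrite /form mulmx1.
have -> : y *m dag y = y *m (invmx P *m P) *m dag y by rewrite mulVmx // mulmx1.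
rewrite Pinv.
have -> : y *m (dag P *m P) *m dag y = (y *m dag P) *m dag (y *m dag P)
  by rewrite dag_mul dagK !mulmxA.
by rewrite mxE; apply: eq_bigr => i _; rewrite !mxE.
Qed.


Lemma eig_real n (H : 'M[C]_n) : Defs.hermitian H ->
  all (fun x => x \is Num.real) (eigvals H) /\ head 0 (eigvals H) \is Num.real.
Proof.
move=> hH; have /mxOverP rd := hermitian_spectral_diag_real (herm_hermsym hH).
have al : all (fun x => x \is Num.real) (eigvals H).
  by apply/allP => x /mapP [i _ ->]; exact: rd.
split => //; case: (eigvals H) al => [|a s] /=; [by rewrite real0 | by case/andP].
Qed.

Lemma eig_mem n (H : 'M[C]_n) i : spectral_diag H 0 i \in eigvals H.
Proof. by apply: map_f; rewrite mem_enum. Qed.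

Lemma lmin_le n (H : 'M[C]_n) y : Defs.hermitian H ->
  lambda_min H * form 1%:M y y <= form H y y.
Proof.
move=> hH; have [al hr] := eig_real hH.
have [_ hm] := foldr_min_le hr al.
have [w [-> ->]] := herm_decomp y hH.
rewrite mulr_sumr; apply: ler_sum => i _.
by apply: ler_wpM2r; [exact: mul_conjC_ge0 | exact: hm (eig_mem _ _)].
Qed.

Lemma lmax_ge n (H : 'M[C]_n) y : Defs.hermitian H ->
  form H y y <= lambda_max H * form 1%:M y y.
Proof.
move=> hH; have [al hr] := eig_real hH.
have [_ hm] := foldr_max_ge hr al.
have [w [-> ->]] := herm_decomp y hH.
rewrite mulr_sumr; apply: ler_sum => i _.
by apply: ler_wpM2r; [exact: mul_conjC_ge0 | exact: hm (eig_mem _ _)].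
Qed.


Lemma pd1 n : pos_def (1%:M : 'M[C]_n).
Proof.
split; first exact: dag1.
move=> v nz; have := @dotmx_is_dotmx C n v nz.
by rewrite dotmxE mulmx1.
Qed.

Lemma opnorm_bound n (N : 'M[C]_n) y : 0 <= form N y y ->
  form N y y <= opnorm N * form 1%:M y y.
Proof.
move=> r0.
have [->|nz] := eqVneq y 0; first by rewrite !form0r mulr0.
set r := form N y y in r0 *; set g := form 1%:M y y.
set y' := y *m dag N.
have e1 : form 1%:M y y' = r by rewrite /form /y' mulmx1 dag_mul dagK mulmxA.
have e2 : form 1%:M y' y' = form (dag N *m N) y y
  by rewrite /form /y' mulmx1 dag_mul dagK !mulmxA.
have e3 : form 1%:M y' y = r by rewrite -form_conj ?e1 ?geC0_conj //; exact: dag1.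
have hNN : Defs.hermitian (dag N *m N) by rewrite /Defs.hermitian dag_mul dagK.
have := CS y y' (@pd1 n); rewrite e1 e3 e2.
set L := lambda_max (dag N *m N).
have hL : form (dag N *m N) y y <= L * g by exact: lmax_ge.
have gpos : 0 < g by exact: (pd1 n).2.
move=> hr; have {hr} hr : r ^+ 2 <= L * g ^+ 2.
  rewrite expr2 (le_trans hr) // mulrC expr2 mulrA ler_pM2r //.
have L0 : 0 <= L.
  by rewrite -(pmulr_lge0 _ (exprn_gt0 2 gpos)) (le_trans _ hr) // exprn_ge0.
have s0 : 0 <= sqrtC L * g by rewrite mulr_ge0 ?sqrtC_ge0 // ltW.
rewrite /opnorm -/L -ler_sqr ?nnegrE //.
by rewrite exprMn sqrtCK.
Qed.


Lemma re_lower (c : C) : 0 <= `|c| *+ 2 + (c + c^*).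
Proof.
have [->|nz] := eqVneq c 0; first by rewrite normr0 mul0rn rmorph0 !addr0.
have np : 0 < `|c| by rewrite normr_gt0.
rewrite -(pmulr_rge0 _ np).
have -> : `|c| * (`|c| *+ 2 + (c + c^*)) = (`|c| + c) * (`|c| + c)^*.
  have cd : (`|c| + c)^* = `|c| + c^*.
    by rewrite rmorphD; congr (_ + _); exact: geC0_conj.
  rewrite cd.
  have e : `|c| * `|c| = c * c^* by rewrite -expr2 normCK.
  apply/eqP; rewrite -subr_eq0.
  have -> : `|c| * (`|c| *+ 2 + (c + c^*)) - (`|c| + c) * (`|c| + c^*)
    = `|c| * `|c| - c * c^* by ring.
  by rewrite e subrr.
exact: mul_conjC_ge0.
Qed.

Lemma form_conjG n (A : 'M[C]_n) u w : (form A u w)^* = form (dag A) w u.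
Proof.
rewrite /form.
have -> : ((u *m A *m dag w) 0 0)^* = dag (u *m A *m dag w) 0 0 by rewrite !mxE.
by rewrite !dag_mul dagK mulmxA.
Qed.

Lemma dag_block p (A B D E : 'M[C]_p) :
  dag (block_mx A B D E) = block_mx (dag A) (dag D) (dag B) (dag E).
Proof. by rewrite /dag tr_block_mx map_block_mx. Qed.

Lemma dag_row p (x y : 'rV[C]_p) : dag (row_mx x y) = col_mx (dag x) (dag y).
Proof. by rewrite /dag tr_row_mx map_col_mx. Qed.

Lemma block_psd p (A B : 'M[C]_p) : Defs.hermitian A ->
  (forall x y, `|form B x y| *+ 2 <= form A x x + form A y y) ->
  psd (block_mx A B (dag B) A).
Proof.
move=> hA hB; split.
  by rewrite /Defs.hermitian dag_block dagK hA.
move=> v; rewrite -[v]hsubmxK; set x := lsubmx v; set y := rsubmx v.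
rewrite dag_row mul_row_block mul_row_col !mulmxDl mxE [X in _ + X]mxE.
have := hB x y; set c := form B x y.
have ec : (y *m dag B *m dag x) 0 0 = c^* by rewrite /c form_conjG.
have -> : (x *m A *m dag x + y *m dag B *m dag x) 0 0 = form A x x + c^*
  by rewrite mxE ec.
rewrite -/(form A y y) -/c => h.
have := re_lower c; rewrite -subr_ge0 in h.
move=> h2; have := addr_ge0 h h2.
have -> : (x *m B *m dag y) 0 0 = c by [].
suff -> : form A x x + c^* + (c + form A y y) =
  form A x x + form A y y - `|c| *+ 2 + (`|c| *+ 2 + (c + c^*)) by [].
clear ec h h2; clearbody c; move: (form A x x) (form A y y) => a b; ring.
Qed.


Lemma conj_herm m n (U : 'M[C]_(m, n)) X : Defs.hermitian X -> Defs.hermitian (U *m X *m dag U).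
Proof. by move=> h; rewrite /Defs.hermitian !dag_mul dagK h mulmxA. Qed.

Lemma conj_form m n (U : 'M[C]_(m, n)) X v : form (U *m X *m dag U) v v = form X (v *m U) (v *m U).
Proof. by rewrite /form dag_mul !mulmxA. Qed.

Lemma conj_psd m n (U : 'M[C]_(m, n)) X : psd X -> psd (U *m X *m dag U).
Proof.
case=> h1 h2; split; first exact: conj_herm.
by move=> v; have := conj_form U X v; rewrite /form => ->.
Qed.

Lemma conj_tr m n (U : 'M[C]_(m, n)) X : dag U *m U = 1%:M -> \tr (U *m X *m dag U) = \tr X.
Proof. by move=> h; rewrite mxtrace_mulC mulmxA h mul1mx. Qed.

Lemma conj_density n (U : 'M[C]_n) X : dag U *m U = 1%:M ->
  density_matrix X -> density_matrix (U *m X *m dag U).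
Proof.
move=> hU [h1 [h2 h3]]; split; first exact: conj_herm.
by split; [exact: conj_psd | rewrite conj_tr].
Qed.

Lemma cast_density n m (e : n = m) (B : 'M[C]_n) :
  density_matrix B -> density_matrix (castmx (e, e) B).
Proof. by case: m / e; rewrite castmx_id. Qed.

Lemma perm_unitary n (s : 'S_n) : dag (perm_mx s : 'M[C]_n) *m perm_mx s = 1%:M.
Proof.
have -> : dag (perm_mx s : 'M[C]_n) = perm_mx s^-1.
  rewrite -tr_perm_mx; apply/matrixP => i j; rewrite !mxE.
  by case: eqP; rewrite ?conjC1 ?conjC0.
by rewrite -perm_mxM mulVg perm_mx1.
Qed.

Lemma block_density p (A B : 'M[C]_p) : Defs.hermitian A -> \tr A = 2^-1 ->
  (forall x y, `|form B x y| *+ 2 <= form A x x + form A y y) ->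
  density_matrix (block_mx A B (dag B) A).
Proof.
move=> hA tA hB; have P := block_psd hA hB; split; first exact: P.1.
split=> //; rewrite mxtrace_block tA.
by field.
Qed.


Lemma I2E (i : 'I_2) : i = ord0 \/ i = ord_max.
Proof. by case: i => [[|[|//]] Hi]; [left|right]; apply/val_inj. Qed.

Lemma pauli_pair x z (i j j' : 'I_2) :
  (pauli1 C x z i j)^* * pauli1 C x z i j' = ((j == j') && ((i != j) == x))%:R.
Proof.
case: x; case: z; case: (I2E i) => ->; case: (I2E j) => ->; case: (I2E j') => ->;
rewrite /pauli1 /pauliX /pauliZ !mxE !big_ord_recl !big_ord0 !mxE /=.
all: rewrite ?(mulr0,mul0r,mulr1,mul1r,add0r,addr0) //.
all: rewrite ?(rmorph0,rmorph1,conjC1,conjC0,rmorphN1, expr0, expr1, mulrN1, mulN1r, opprK, oppr0) //.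

Qed.

Lemma bits_inj_nat n : forall a b, (a < 2 ^ n)%N -> (b < 2 ^ n)%N ->
  (forall i, (i < n)%N -> odd (a %/ 2 ^ i) = odd (b %/ 2 ^ i)) -> a = b.
Proof.
elim: n => [|n IH] a b.
  by rewrite expn0 !ltnS !leqn0 => /eqP-> /eqP->.
move=> ha hb h.
have h0 := h 0%N isT; rewrite expn0 !divn1 in h0.
have e : (a %/ 2 = b %/ 2)%N.
  apply: IH; first by rewrite ltn_divLR // -expnSr.
    by rewrite ltn_divLR // -expnSr.
  move=> i hi; rewrite -!divnMA -expnS; exact: h.
by rewrite -[a](ssrnat.odd_double_half) -[b](ssrnat.odd_double_half) h0 -!divn2 e.
Qed.

Lemma qbit_val n j a : nat_of_ord (qbit n j a) = odd (a %/ 2 ^ (n - j.+1))%N.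
Proof. by rewrite /qbit inordK // ltnS leq_b1. Qed.

Lemma qbit_inj n (a b : 'I_(2 ^ n)) :
  (forall j : 'I_n, qbit n j a = qbit n j b) -> a = b.
Proof.
move=> h; apply/val_inj/(@bits_inj_nat n); [exact: ltn_ord | exact: ltn_ord | move=> i hi].
have hj : (n - i.+1 < n)%N by lia.
have := congr1 (@nat_of_ord 2) (h (Ordinal hj)); rewrite !qbit_val /=.
have -> : (n - (n - i.+1).+1 = i)%N by lia.
by case: (odd (a %/ 2 ^ i))%N; case: (odd (b %/ 2 ^ i))%N.
Qed.


Lemma prod_bool (I : finType) (P : pred I) :
  \prod_(i : I) ((P i)%:R : C) = ([forall i, P i])%:R.
Proof.
case: forallP => h.
  by rewrite big1 // => i _; rewrite h.
have [j /negbTE hj] : exists j, ~~ P j.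
  by apply/existsP; rewrite -negb_forall; apply/negP => /forallP.
by rewrite (bigD1 j) //= hj mul0r.
Qed.

Definition flip2 (i : 'I_2) : 'I_2 := if i == ord0 then ord_max else ord0.

Lemma flip2P (v w : 'I_2) (x : bool) :
  ((v != w) == x) = (v == if x then flip2 w else w).
Proof.
by case: x; case: (I2E v) => ->; case: (I2E w) => ->.
Qed.

Lemma otp_unitary n (k : (2 * n).-tuple bool) : dag (otp C k) *m otp C k = 1%:M.
Proof.
apply/matrixP => b c; rewrite !mxE.
set xb := fun j : 'I_n => nth false k (2 * j).
set zb := fun j : 'I_n => nth false k (2 * j).+1.
have term : forall a : 'I_(2 ^ n), dag (otp C k) b a * otp C k a c =
   ([forall j : 'I_n, (qbit n j b == qbit n j c) &&
                      ((qbit n j a != qbit n j b) == xb j)])%:R.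
  move=> a; rewrite !mxE rmorph_prod -big_split /= -prod_bool.
  by apply: eq_bigr => j _; rewrite pauli_pair.
rewrite (eq_bigr _ (fun a _ => term a)).
have [<-|nbc] := eqVneq b c; last first.
  rewrite big1 // => a _; case: forallP => // h; case/eqP: nbc.
  by apply: qbit_inj => j; have /andP[/eqP] := h j.
set qv := fun a : 'I_(2 ^ n) => ([ffun j : 'I_n => qbit n j a] : {ffun 'I_n -> 'I_2}).
have qinj : injective qv.
  by move=> a a' e; apply: qbit_inj => j; have := congr1 (fun f : {ffun 'I_n -> 'I_2} => f j) e; rewrite /qv !ffunE.
set t := ([ffun j : 'I_n => if xb j then flip2 (qbit n j b) else qbit n j b] : {ffun 'I_n -> 'I_2}).
have : t \in codom qv.
  by apply: inj_card_onto => //; rewrite card_ffun !card_ord.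
case/codomP => a0 ta0.
have key : forall a : 'I_(2 ^ n), [forall j : 'I_n, (qbit n j b == qbit n j b) &&
                      ((qbit n j a != qbit n j b) == xb j)] = (a == a0).
  move=> a; apply/forallP/eqP => [h|->] .
    apply: qinj; rewrite -ta0; apply/ffunP => j; rewrite /qv !ffunE.
    by have /andP[_] := h j; rewrite flip2P => /eqP.
  move=> j; rewrite eqxx /= flip2P.
  by have := congr1 (fun f : {ffun 'I_n -> 'I_2} => f j) ta0; rewrite /qv /t !ffunE => ->.
rewrite (bigD1 a0) //= key eqxx big1 ?addr0 // => a /negbTE na.
by rewrite key na.
Qed.

End Aux.

Lemma formZm (C : numClosedFieldType) n (A : 'M[C]_n) a u w : form (a *: A) u w = a * form A u w.
Proof. by rewrite /form -scalemxAr -scalemxAl mxE. Qed.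

Lemma herm_scale (C : numClosedFieldType) n (A : 'M[C]_n) (m : nat) :
  Defs.hermitian A -> Defs.hermitian ((m%:R)^-1 *: A).
Proof. by move=> h; rewrite /Defs.hermitian dagZ h; congr (_ *: _); rewrite fmorphV; congr (_^-1); exact: conjC_nat. Qed.

Unset Implicit Arguments.
Theorem theorem12 (C : numClosedFieldType) (d1 d2 : nat)
  (hd2 : (1 <= d2)%N) (hd12 : (d2 <= d1)%N)
  (eps : C) (heps : 0 < eps) (eta : nat) (heta : (0 < eta)%N)
  (heta_eps : (eta%:R)^-1 < eps)
  (Mo : 'M[C]_(2 ^ d1)) (Mc : 'M[C]_(2 ^ d2))
  (hMo_dens : density_matrix Mo) (hMo_pd : pos_def Mo)
  (hMc_dens : density_matrix Mc)
  (k : (2 * d1).-tuple bool) (k' : (2 * d2).-tuple bool)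
  (s : 'S_(2 ^ d1.+1)) :
  let Mo' := otp C k *m Mo *m dag (otp C k) in
  let Mc' := otp C k' *m Mc *m dag (otp C k') in
  let Mc'' := padV C d1 d2 *m Mc' *m dag (padV C d1 d2) in
  let Ma0 := qblock (2^-1 *: Mo') 0 0 (2^-1 *: Mo') in
  let Ma1 := qblock (2^-1 *: Mo') ((eta%:R)^-1 *: Mc'')
                    ((eta%:R)^-1 *: dag Mc'') (2^-1 *: Mo') in
  let Usig : 'M[C]_(2 ^ d1.+1) := perm_mx s in
  let Mf0 := Usig *m Ma0 *m dag Usig in
  let Mf1 := Usig *m Ma1 *m dag Usig in
  (eta%:R ^+ 2)^-1 * opnorm (Mc'' *m invmx Mo' *m Mc'') <= 4^-1 * lambda_min Mo' ->
  density_matrix Mf0 /\ density_matrix Mf1.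
Proof.
move=> Mo' Mc' Mc'' Ma0 Ma1 Usig Mf0 Mf1 hyp.
set U := otp C k.
have hU : dag U *m U = 1%:M by exact: otp_unitary.
have [_ Uu] := mulmx1_unit hU.
have hMo : Defs.hermitian Mo by case: hMo_dens.
have dMo' : density_matrix Mo' by exact: conj_density.
have hMo' : Defs.hermitian Mo' by case: dMo'.
have pMo' : pos_def Mo'.
  split => // v nz; rewrite -/(form Mo' v v) conj_form.
  apply: hMo_pd.2; apply: contra nz => /eqP e.

  by rewrite -(mulmxK Uu v) e mul0mx.
have trMo' : \tr Mo' = 1 by case: dMo' => _ [].
have hMc : Defs.hermitian Mc by case: hMc_dens.
have hMc'' : Defs.hermitian Mc'' by apply: conj_herm; apply: conj_herm.
set A := 2^-1 *: Mo'.
have hA : Defs.hermitian A by exact: (herm_scale 2 hMo').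
have trA : \tr A = 2^-1 by rewrite mxtraceZ trMo' mulr1.
have fA : forall x, form A x x = 2^-1 * form Mo' x x by move=> x; rewrite formZm.
have fA0 : forall x, 0 <= form A x x.
  by move=> x; rewrite fA mulr_ge0 ?invr_ge0 ?ler0n ?psd_form.
split.
  apply: conj_density; first exact: perm_unitary.
  rewrite /Ma0 /qblock; apply: cast_density.
  have := @block_density _ _ A 0 hA trA; rewrite dag0; apply => x y.
  rewrite /form mulmx0 mul0mx mxE normr0 mul0rn.
  exact: (addr_ge0 (fA0 x) (fA0 y)).
apply: conj_density; first exact: perm_unitary.
rewrite /Ma1 /qblock; apply: cast_density.
set e := (eta%:R)^-1 : C.
have -> : e *: dag Mc'' = dag (e *: Mc'') by rewrite dagZ /e; congr (_ *: _); rewrite fmorphV; congr (_^-1); exact/esym/conjC_nat.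
apply: block_density hA trA _ => x y.
rewrite formZm !fA.
clear Mf0 Mf1 Usig Ma0 Ma1 fA fA0; clearbody Mc'' Mo'.
set a := form Mo' x x; set b := form Mo' y y; set c := form Mc'' x y.
have Mu : Mo' \in unitmx.
  rewrite unitmxE unitfE; apply/negP => /det0P [v nz hv].
  have := pMo'.2 v nz; by rewrite /form hv mul0mx mxE ltxx.
set Ai := invmx Mo'.
have hAi : dag Ai = Ai by rewrite /Ai dag_inv hMo'.
set N := Mc'' *m Ai *m Mc''.
set w := y *m Mc'' *m Ai.
have dw : dag w = Ai *m Mc'' *m dag y by rewrite /w dag_mul (dag_mul y) hAi hMc'' mulmxA.
have e1 : form Mo' x w = c by rewrite /form dw !mulmxA /Ai mulmxK.
have e2 : form Mo' w w = form N y y by rewrite /form dw /w /N /Ai !mulmxA mulmxKV.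
have e3 : form Mo' w x = c^* by rewrite -form_conj // e1.
have hcs := CS x w pMo'; rewrite e1 e3 e2 in hcs.
have q0 : 0 <= form N y y by rewrite -e2 psd_form.
have hq := opnorm_bound q0.
have hl := lmin_le y hMo'.
have a0 : 0 <= a by exact: psd_form.
have b0 : 0 <= b by exact: psd_form.
have g0 : 0 <= form 1%:M y y by apply: psd_form; exact: pd1.
have e0 : 0 < e by rewrite /e invr_gt0 ltr0n.
set g := form 1%:M y y in hq hl g0.
set L := lambda_min Mo' in hyp hl.
set on := opnorm N in hq hyp.
have key : (e * `|c|) ^+ 2 <= 4^-1 * (a * b).
  rewrite exprMn normCK.
  apply: le_trans (_ : e ^+ 2 * (a * (on * g)) <= _).
    rewrite ler_wpM2l ?exprn_ge0 ?(ltW e0) //.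
    apply: le_trans hcs _; rewrite ler_wpM2l //.
  have -> : e ^+ 2 * (a * (on * g)) = a * ((e ^+ 2 * on) * g) by ring.
  apply: le_trans (_ : a * ((4^-1 * L) * g) <= _).
    rewrite ler_wpM2l // ler_wpM2r //.
    by rewrite /e exprVn.
  have -> : a * ((4^-1 * L) * g) = 4^-1 * (a * (L * g)) by ring.
  rewrite ler_wpM2l ?invr_ge0 ?ler0n // ler_wpM2l //.
rewrite normrM (ger0_norm (ltW e0)).
set z := e * `|c| in key *.
have z0 : 0 <= z by rewrite mulr_ge0 ?normr_ge0 ?(ltW e0).
have agm := (real_leif_AGM2 (ger0_real a0) (ger0_real b0)).1.
have -> : 2^-1 * a + 2^-1 * b = (a + b) / 2 by ring.
have ab0 : 0 <= (a + b) / 2 by rewrite mulr_ge0 ?addr_ge0 ?invr_ge0 ?ler0n.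
rewrite -ler_sqr ?nnegrE ?mulrn_wge0 //.
apply: le_trans agm.
have -> : (z *+ 2) ^+ 2 = 4 * z ^+ 2 by ring.
have -> : a * b = 4 * (4^-1 * (a * b)) by field.
by rewrite ler_wpM2l ?ler0n.
Qed.
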